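(* Let $1\le b<\frac{n}{2}-1$ and let $T$ be a tree attaining the maximum value of $M_2$ over $\mathcal{CT}^*_{n,b}$. If $T$ contains a pendent vertex adjacent to a branching vertex, then $T$ contains no pendent path of length greater than $2$.
   Context: A chemical tree is a tree with maximum degree at most $4$. A pendent vertex has degree $1$; a branching vertex has degree greater than $2$. A pendent path is a path $u_0\cdots u_r$ ($r\ge1$) with $u_0$ pendent, $u_r$ branching and all internal vertices of degree $2$; its length is $r$. $\mathcal{CT}^*_{n,b}$ is the class of all $n$-vertex chemical trees with exactly $b$ branching vertices. $M_2(G)=\sum_{uv\in E(G)}d_ud_v$, where $d_v$ is the degree of $v$. *)

(* Defs.v *)
From mathcomp Require Import all_boot.
Set Implicit Arguments. Unset Strict Implicit. Unset Printing Implicit Defensive.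

Definition simple_graph (n : nat) (e : rel 'I_n) : Prop :=
  symmetric e /\ irreflexive e.

Definition deg (n : nat) (e : rel 'I_n) (v : 'I_n) : nat := #|[pred w | e v w]|.

Definition acyclic (n : nat) (e : rel 'I_n) : Prop :=
  forall c : seq 'I_n, uniq c -> 3 <= size c -> ~~ cycle e c.

Definition connected (n : nat) (e : rel 'I_n) : Prop :=
  forall x y : 'I_n, connect e x y.

Definition is_tree (n : nat) (e : rel 'I_n) : Prop :=
  simple_graph e /\ connected e /\ acyclic e.

Definition in_CTstar (n b : nat) (e : rel 'I_n) : Prop :=
  is_tree e /\ (forall v, deg e v <= 4) /\ #|[pred v | 2 < deg e v]| = b.

Definition M2 (n : nat) (e : rel 'I_n) : nat :=
  \sum_(u : 'I_n) \sum_(v : 'I_n | (u < v) && e u v) deg e u * deg e v.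

(* u0 :: p is a pendent path of length size p *)
Definition pendent_path (n : nat) (e : rel 'I_n) (u0 : 'I_n) (p : seq 'I_n) : Prop :=
  [/\ 1 <= size p, path e u0 p, uniq (u0 :: p), deg e u0 = 1
    & 2 < deg e (last u0 p)] /\
  (* internal vertices u_1 .. u_{r-1} have degree 2 *)
  all (fun w => deg e w == 2) (behead (belast u0 p)).

(* Main.v *)
Require Import Defs.
From mathcomp Require Import all_boot.
From mathcomp Require Import zify.
Set Implicit Arguments. Unset Strict Implicit. Unset Printing Implicit Defensive.

Section Aux.
Variable n : nat.
Implicit Types (e : rel 'I_n).

Lemma deg1_nbr e z y : deg e z = 1 -> e z y -> forall w, e z w -> w = y.
Proof.
move=> d zy w zw; apply/eqP; apply/negP => /negP ne.
have : #|[:: w; y]| <= deg e z.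
  apply: subset_leq_card; apply/subsetP => t; rewrite !inE.
  by case/orP => /eqP ->.
have/card_uniqP-> : uniq [:: w; y] by rewrite /= inE ne.
by rewrite d.
Qed.

Lemma deg2_nbr e z a c : deg e z = 2 -> e z a -> e z c -> a != c ->
  forall w, e z w -> (w == a) || (w == c).
Proof.
move=> d za zc ac w zw; case: (boolP ((w == a) || (w == c))) => // /norP [wa wc].
have : #|[:: w; a; c]| <= deg e z.
  apply: subset_leq_card; apply/subsetP => t; rewrite !inE.
  by case/or3P => /eqP ->.
have/card_uniqP-> : uniq [:: w; a; c] by rewrite /= !inE negb_or wa wc ac.
by rewrite d.
Qed.

Lemma path_end e z y0 : symmetric e -> (forall w, e z w -> w = y0) ->
  forall s a, path e a s -> uniq (a :: s) -> z \in a :: s -> z = a \/ z = last a s.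
Proof.
move=> sym nb; elim=> [|b s IH] a /=.
  by move=> _ _; rewrite inE => /eqP; left.
case/andP=> eab pb /andP[na us]; rewrite inE => /orP[/eqP->|zin]; first by left.
case: (IH b pb us zin) => [zb|]; last by right.
case: s {IH} pb us zin na => [|c s] /=; first by right.
case/andP => ebc _ _ _ na.
have h1 := nb a; have h2 := nb c; rewrite zb in h1 h2.
have ac : a = c.
  have -> := h1 (etrans (sym b a) eab).
  by have -> := h2 ebc.
by move: na; rewrite ac !inE eqxx orbT.
Qed.

Lemma cycle_nbr e z y0 : symmetric e -> (forall w, e z w -> w = y0) ->
  forall c, uniq c -> 3 <= size c -> cycle e c -> z \notin c.
Proof.
move=> sym nb c uc sc cc; apply/negP => zc.
case: (rot_to zc) => i s hr.
have cc' : cycle e (z :: s) by rewrite -hr rot_cycle.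
have uc' : uniq (z :: s) by rewrite -hr rot_uniq.
have sc' : 3 <= size (z :: s) by rewrite -hr size_rot.
clear hr; case: s cc' uc' sc' => [|b [|c1 s]] //.
rewrite /cycle rcons_path => /andP[p1 el] uc' _.
move: p1 => /= /andP[ezb _].
move: el => /=; rewrite sym => el.
have hb := nb _ ezb; have hl := nb _ el.
move: uc' => /= /andP[_ /andP[nbin _]].
by move: nbin; rewrite hb -hl mem_last.
Qed.

Definition T e (pr : 'I_n * 'I_n) : nat :=
  ((pr.1 < pr.2) && e pr.1 pr.2) * (deg e pr.1 * deg e pr.2).

Lemma M2_pair e : M2 e = \sum_(pr : 'I_n * 'I_n) T e pr.
Proof.
rewrite /M2; under eq_bigr do rewrite big_mkcond /=.
rewrite pair_big; apply: eq_bigr => [[a c]] _ /=.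
by rewrite /T /=; case: ifP => _; rewrite ?mul1n ?mul0n.
Qed.

Lemma split_sum (F : 'I_n * 'I_n -> nat) (s : seq ('I_n * 'I_n)) : uniq s ->
  \sum_pr F pr = \sum_(pr <- s) F pr + \sum_(pr | pr \notin s) F pr.
Proof.
move=> us; rewrite (bigID [pred pr | pr \in s]) /= big_uniq //.
Qed.

Lemma Tsym e a c : symmetric e -> a != c ->
  T e (a, c) + T e (c, a) = e a c * (deg e a * deg e c).
Proof.
move=> sym ac; rewrite /T /= (sym c a).
case: (ltngtP a c) => h /=.
- by rewrite addn0.
- by rewrite mul0n add0n [deg e c * _]mulnC.
- by move/val_inj: h => h; rewrite h eqxx in ac.
Qed.

Definition swap_rel e (u0 u1 x : 'I_n) : rel 'I_n := fun a c =>
  ((a == u0) && (c == x)) || ((a == x) && (c == u0)) ||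
  (e a c && ~~ (((a == u0) && (c == u1)) || ((a == u1) && (c == u0)))).

End Aux.

Theorem lemma12 (n b : nat) (e : rel 'I_n) :
  1 <= b -> 2 * (b + 1) < n ->
  in_CTstar b e ->
  (forall e' : rel 'I_n, in_CTstar b e' -> M2 e' <= M2 e) ->
  (exists u v : 'I_n, [/\ deg e u = 1, 2 < deg e v & e u v]) ->
  forall (u0 : 'I_n) (p : seq 'I_n), pendent_path e u0 p -> size p <= 2.
Proof.
move=> _ _ [[[sym irr] [conn acyc]] [d4 nbr]] Hmax [x [v [dx dv exv]]] u0 p
  [[sp pp up du0 dl] intd].
rewrite leqNgt; apply/negP => sp3.
case: p sp pp up dl intd sp3 => [|u1 [|u2 [|u3 q]]] // _.
rewrite /= => /and3P [e01 e12 _] /and4P [n0 n1 n2 _] _ /and3P [/eqP d1 /eqP d2 _] _.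
have u01 : u0 != u1 by apply: contra n0 => /eqP->; rewrite mem_head.
have u02 : u0 != u2 by apply: contra n0 => /eqP->; rewrite !inE eqxx orbT.
have u12 : u1 != u2 by apply: contra n1 => /eqP->; rewrite mem_head.
have e10 : e u1 u0 by rewrite sym.
have nb0 := deg1_nbr du0 e01.
have nbx := deg1_nbr dx exv.
have nb1 := deg2_nbr d1 e10 e12 u02.
have xu0 : x != u0 by apply/eqP => h; move: dv; rewrite (nb0 v) ?d1 // -h.
have xu1 : x != u1 by apply/eqP => h; move: dx; rewrite h d1.
have xu2 : x != u2 by apply/eqP => h; move: dx; rewrite h d2.
have vu0 : v != u0 by apply/eqP => h; move: dv; rewrite h du0.
have vu1 : v != u1 by apply/eqP => h; move: dv; rewrite h d1.
have vu2 : v != u2 by apply/eqP => h; move: dv; rewrite h d2.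
have vx : v != x by apply/eqP => h; move: dv; rewrite h dx.
have u10 : u1 != u0 by rewrite eq_sym.
have u20 : u2 != u0 by rewrite eq_sym.
have u21 : u2 != u1 by rewrite eq_sym.
have u0x : u0 != x by rewrite eq_sym.
have u1x : u1 != x by rewrite eq_sym.
have u2x : u2 != x by rewrite eq_sym.
have u0v : u0 != v by rewrite eq_sym.
have u1v : u1 != v by rewrite eq_sym.
have u2v : u2 != v by rewrite eq_sym.
have xv : x != v by rewrite eq_sym.
have NE := (negbTE u01, negbTE u02, negbTE u12, negbTE xu0, negbTE xu1, negbTE xu2,
  negbTE vu0, negbTE vu1, negbTE vu2, negbTE vx, negbTE u10, negbTE u20,
  negbTE u21, negbTE u0x, negbTE u1x, negbTE u2x, negbTE u0v, negbTE u1v,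
  negbTE u2v, negbTE xv).
pose e' := swap_rel e u0 u1 x.
have ee'o : forall a c, a != u0 -> a != u1 -> a != x -> e' a c = e a c.
  move=> a c h0 h1 hx.
  by rewrite /e' /swap_rel (negbTE h0) (negbTE h1) (negbTE hx) /= andbT.
have de'o : forall z, z != u0 -> z != u1 -> z != x -> deg e' z = deg e z.
  by move=> z h0 h1 hx; apply: eq_card => w; rewrite !inE ee'o.
have de'0 : deg e' u0 = 1.
  rewrite -(card1 x); apply: eq_card => w; rewrite !inE /e' /swap_rel eqxx !NE /=.
  rewrite !orbF; case ew: (e u0 w); rewrite /= ?orbF //.
  by rewrite (nb0 _ ew) eqxx !NE.
have de'1 : deg e' u1 = 1.
  rewrite -(card1 u2); apply: eq_card => w; rewrite !inE /e' /swap_rel eqxx !NE /=.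
  case ew: (e u1 w) => /=.
    by case/orP: (nb1 _ ew) => /eqP ->; rewrite ?eqxx !NE.
  by apply/esym/negP => /eqP h; move: ew; rewrite h e12.
have de'x : deg e' x = 2.
  transitivity #|pred2 u0 v|; last by rewrite card2 u0v.
  apply: eq_card => w; rewrite !inE /e' /swap_rel eqxx !NE /=.
  rewrite andbT; congr (_ || _).
  case ew: (e x w); first by rewrite (nbx _ ew) eqxx.
  by apply/esym/negP => /eqP h; move: ew; rewrite h exv.
have deq : forall z, z != u1 -> z != x -> deg e' z = deg e z.
  move=> z h1 hx; case: (eqVneq z u0) => [->|h0]; first by rewrite de'0 du0.
  exact: de'o.
have sym' : symmetric e'.
  move=> a c; rewrite /e' /swap_rel (sym c a).
  by case: (a==u0); case: (c==x); case: (a==x); case: (c==u0); case: (a==u1);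
     case: (c==u1); case: (e a c).
have nb0' : forall w, e' u0 w -> w = x.
  move=> w; rewrite /e' /swap_rel eqxx !NE /=.
  rewrite !orbF => /orP [/eqP //|/andP [ew]].
  by rewrite (nb0 _ ew) eqxx.
have sub1 : {in [pred w | w != u0] &, subrel e e'}.
  move=> a c; rewrite !inE => ha hc eac.
  by rewrite /e' /swap_rel (negbTE ha) (negbTE hc) !andbF /= andbT.
have sub2 : {in [pred w | w != u0] &, subrel e' e}.
  move=> a c; rewrite !inE => ha hc.
  by rewrite /e' /swap_rel (negbTE ha) (negbTE hc) !andbF /= => /andP[].
have tree' : in_CTstar b e'.
  split; [split; [split|split]|split].
  - exact: sym'.
  - move=> a; rewrite /e' /swap_rel irr andFb orbF.
    apply/negP => /orP[] /andP[/eqP h1 /eqP h2].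
      by move: xu0; rewrite -h1 -h2 eqxx.
    by move: xu0; rewrite -h1 -h2 eqxx.
  - have cy : forall y z, y != u0 -> z != u0 -> connect e' y z.
      move=> y z hy hz; case/connectP: (conn y z) => s ps lz.
      case/shortenP: ps lz => s' ps' us' _ lz.
      have nin : u0 \notin y :: s'.
        apply/negP => hin.
        case: (path_end sym nb0 ps' us' hin) => h.
          by move: hy; rewrite h eqxx.
        by move: hz; rewrite lz h eqxx.
      apply/connectP; exists s' => //.
      apply: (sub_in_path sub1) ps'.
      apply/allP => w win; rewrite inE; apply/eqP => h; move: nin.
      by rewrite -h win.
    have e'u0x : e' u0 x by rewrite /e' /swap_rel !eqxx.
    have e'xu0 : e' x u0 by rewrite sym'.
    move=> y z.
    case: (eqVneq y u0) => [->|hy]; case: (eqVneq z u0) => [->|hz].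
    + exact: connect0.
    + exact: connect_trans (connect1 e'u0x) (cy _ _ xu0 hz).
    + exact: connect_trans (cy _ _ hy xu0) (connect1 e'xu0).
    + exact: cy.
  - move=> c uc sc; apply/negP => cc.
    have nin := cycle_nbr sym' nb0' uc sc cc.
    have : cycle e c.
      apply: (sub_in_cycle sub2) cc.
      apply/allP => w win; rewrite inE; apply/eqP => h; move: nin.
      by rewrite -h win.
    by apply/negP; apply: acyc.
  - move=> z; case: (eqVneq z u1) => [->|h1]; first by rewrite de'1.
    case: (eqVneq z x) => [->|hx]; first by rewrite de'x.
    by rewrite deq.
  - rewrite -nbr; apply: eq_card => z; rewrite !inE.
    case: (eqVneq z u1) => [->|h1]; first by rewrite de'1 d1.
    case: (eqVneq z x) => [->|hx]; first by rewrite de'x dx.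
    by rewrite deq.
pose S := [:: (u0,u1); (u1,u0); (u0,x); (x,u0); (u1,u2); (u2,u1); (x,v); (v,x)].
have uS : uniq S by rewrite /S /= !inE !xpair_eqE !NE !eqxx.
have sumS : forall f : 'I_n * 'I_n -> nat, \sum_(pr <- S) f pr =
    (f (u0,u1) + f (u1,u0)) + (f (u0,x) + f (x,u0)) + (f (u1,u2) + f (u2,u1))
    + (f (x,v) + f (v,x)).
  by move=> f; rewrite /S !big_cons big_nil addn0 !addnA.
have inS : forall a c, (a, c) \in S -> (a, c) \notin S -> False.
  by move=> a c ->.
have lt : M2 e < M2 e'.
  rewrite !M2_pair (split_sum (T e) uS) (split_sum (T e') uS).
  have -> : \sum_(pr | pr \notin S) T e' pr = \sum_(pr | pr \notin S) T e pr.
    apply: eq_bigr => [[a c]] hS.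
    have ee : e' a c = e a c.
      move: hS; rewrite /e' /swap_rel /S !inE !xpair_eqE.
      by case: (a==u0); case: (c==x); case: (a==x); case: (c==u0); case: (a==u1);
        case: (c==u1); case: (e a c); rewrite /= ?orbT.
    rewrite /T /= ee; case eac: (e a c); last by rewrite !andbF.
    have au1 : a != u1.
      apply/eqP=> h; subst a; case/orP: (nb1 _ eac) => /eqP h; subst c;
      by apply: inS hS; rewrite /S !inE eqxx ?orbT.
    have ax : a != x.
      apply/eqP=> h; subst a; have h := nbx _ eac; subst c;
      by apply: inS hS; rewrite /S !inE eqxx ?orbT.
    have eca : e c a by rewrite sym.
    have cu1 : c != u1.
      apply/eqP=> h; subst c; case/orP: (nb1 _ eca) => /eqP h; subst a;
      by apply: inS hS; rewrite /S !inE eqxx ?orbT.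
    have cx : c != x.
      apply/eqP=> h; subst c; have h := nbx _ eca; subst a;
      by apply: inS hS; rewrite /S !inE eqxx ?orbT.
    by rewrite !deq.
  rewrite ltn_add2r !sumS !Tsym //.
  have e0x : e u0 x = false by apply/negP => h; move: xu1; rewrite (nb0 _ h) eqxx.
  have f1 : e' u0 u1 = false by rewrite /e' /swap_rel !eqxx !NE /= andbF.
  have f2 : e' u0 x by rewrite /e' /swap_rel !eqxx.
  have f3 : e' u1 u2 by rewrite /e' /swap_rel !eqxx !NE /= e12.
  have f4 : e' x v by rewrite /e' /swap_rel !eqxx !NE /= exv.
  rewrite e01 e0x e12 exv f1 f2 f3 f4 du0 d1 dx d2 de'0 de'1 de'x (deq u2 u21 u2x) (deq v vu1 vx) d2.
  move: dv; generalize (deg e v) => k hk /=.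
  move: hk; clear; lia.
have := Hmax e' tree'.
by rewrite leqNgt lt.
Qed.
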